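(* A finite simple graph $G$ is a circular-arc graph if and only if there is a circular ordering of $V(G)$ in which there are no four distinct vertices $a,b,c,d$ appearing clockwise in this order such that $bd\in E(G)$, $ad\notin E(G)$ and $bc\notin E(G)$ (equivalently, $G$ admits a $CA$-free circular ordering).
   Context: A circular ordering of a finite set is obtained by placing its elements at distinct points of a circle; vertices $a,b,c,d$ ''appear clockwise in this order'' if traversing the circle clockwise from $a$ one meets $b$, then $c$, then $d$. $CA$ is the circularly ordered pattern on $v_1,v_2,v_3,v_4$ (clockwise in this order) with required edge $v_2v_4$, required non-edges $v_1v_4$ and $v_2v_3$, and the other pairs unspecified; a circular ordering of $G$ is $CA$-free if no four vertices induce a circularly ordered graph represented by this pattern. A circular-arc graph is the intersection graph of a finite family of arcs of a circle. *)

(* Defs.v *)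
From mathcomp Require Import all_boot.
From Stdlib Require Import Reals.

Set Implicit Arguments.
Unset Strict Implicit.
Unset Printing Implicit Defensive.

(* The circle is R/Z (one full turn = 1); clockwise = increasing angle. *)
(* fractional part: frac x = x - floor x, in [0,1). *)
Definition frac (x : R) : R := (x - (IZR (up x) - 1))%R.

Definition simple_graph (T : finType) (E : rel T) : Prop :=
  (forall u v, E u v = E v u) /\ (forall u, E u u = false).

(* The closed arc starting at angle s and going clockwise for length l
   (0 <= l < 1), as a (periodic) set of angles. *)
Definition in_arc (s l x : R) : Prop := (frac (x - s) <= l)%R.

Definition circular_arc_graph (T : finType) (E : rel T) : Prop :=
  exists s l : T -> R,
    (forall v, 0 <= l v < 1)%R /\
    forall u v, u <> v ->
      (E u v <-> exists x : R, in_arc (s u) (l u) x /\ in_arc (s v) (l v) x).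

Definition circular_ordering (T : finType) (p : T -> R) : Prop :=
  (forall v, 0 <= p v < 1)%R /\ injective p.

Definition clockwise (T : finType) (p : T -> R) (a b c d : T) : Prop :=
  (0 < frac (p b - p a) < frac (p c - p a) /\ frac (p c - p a) < frac (p d - p a))%R.

Definition CA_free (T : finType) (E : rel T) (p : T -> R) : Prop :=
  ~ exists a b c d : T,
      clockwise p a b c d /\ E b d /\ ~~ E a d /\ ~~ E b c.

(* Main.v *)
Require Import Defs.
From mathcomp Require Import all_boot.
From Stdlib Require Import Reals.
From Stdlib Require Import Lra ZArith.
Open Scope R_scope.


Lemma frac_range x : 0 <= frac x < 1.
Proof. unfold frac; destruct (archimed x); lra. Qed.

Lemma frac_small x : 0 <= x < 1 -> frac x = x.
Proof.
intros H; unfold frac; rewrite <- (tech_up x 1); [simpl; lra | lra | lra].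
Qed.

Lemma frac_neg x : -1 <= x < 0 -> frac x = x + 1.
Proof.
intros H; unfold frac; rewrite <- (tech_up x 0); [simpl; lra | simpl; lra | simpl; lra].
Qed.

Lemma frac_cases x : -1 < x < 1 -> (0 <= x /\ frac x = x) \/ (x < 0 /\ frac x = x + 1).
Proof.
intros H; destruct (Rle_dec 0 x).
- left; split; [lra | apply frac_small; lra].
- right; split; [lra | apply frac_neg; lra].
Qed.

Lemma frac_shift x k : frac (x + IZR k) = frac x.
Proof.
destruct (archimed x) as [H1 H2].
unfold frac; rewrite <- (tech_up (x + IZR k) (up x + k)); rewrite ?plus_IZR; lra.
Qed.

Lemma frac_diff x y : frac (x - y) = frac (frac x - frac y).
Proof.
assert (E : x - y = (frac x - frac y) + IZR ((up x - 1) - (up y - 1))).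
{ unfold frac; rewrite !minus_IZR; ring. }
rewrite E frac_shift; reflexivity.
Qed.

Lemma frac0 : frac 0 = 0.
Proof. apply frac_small; lra. Qed.

Lemma arc_inter s1 l1 s2 l2 x :
  in_arc s1 l1 x -> in_arc s2 l2 x -> frac (s2 - s1) <= l1 \/ frac (s1 - s2) <= l2.
Proof.
unfold in_arc; intros H1 H2.
set (a := frac (x - s1)) in *; set (b := frac (x - s2)) in *.
assert (E1 : s2 - s1 = (a - b) + IZR ((up (x - s1) - 1) - (up (x - s2) - 1))).
{ unfold a, b, frac; rewrite !minus_IZR; ring. }
assert (E2 : s1 - s2 = (b - a) + IZR ((up (x - s2) - 1) - (up (x - s1) - 1))).
{ unfold a, b, frac; rewrite !minus_IZR; ring. }
rewrite E1 E2 !frac_shift.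
pose proof (frac_range (x - s1)); pose proof (frac_range (x - s2)).
fold a b in H, H0.
destruct (Rle_dec b a).
- left; rewrite frac_small; lra.
- right; rewrite frac_small; lra.
Qed.

Ltac fc e := let h := fresh "h" in let q := fresh "q" in
  destruct (frac_cases e ltac:(lra)) as [[h q]|[h q]].

Lemma rot pa pb pc pd : 0 <= pa < 1 -> 0 <= pb < 1 -> 0 <= pc < 1 -> 0 <= pd < 1 ->
  (0 < frac (pb - pa) < frac (pc - pa) /\ frac (pc - pa) < frac (pd - pa)) ->
  (pa<pb /\ pb<pc /\ pc<pd) \/ (pb<pc /\ pc<pd /\ pd<pa) \/ (pc<pd /\ pd<pa /\ pa<pb)
  \/ (pd<pa /\ pa<pb /\ pb<pc).
Proof.
intros ? ? ? ? H.
fc (pb - pa); fc (pc - pa); fc (pd - pa);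
first [ left; repeat split; lra | right; left; repeat split; lra
      | right; right; left; repeat split; lra | right; right; right; repeat split; lra
      | exfalso; lra].
Qed.

Lemma tfinal ta tb tc td la lb lc ld :
  0 <= ta < 1 -> 0 <= tb < 1 -> 0 <= tc < 1 -> 0 <= td < 1 ->
  0 <= la -> 0 <= lb -> 0 <= lc -> 0 <= ld ->
  ((ta<=tb /\ tb<=tc /\ tc<=td) \/ (tb<=tc /\ tc<=td /\ td<=ta) \/ (tc<=td /\ td<=ta /\ ta<=tb)
  \/ (td<=ta /\ ta<=tb /\ tb<=tc)) ->
  (frac (td - tb) <= lb \/ frac (tb - td) <= ld) ->
  lb < frac (tc - tb) -> lc < frac (tb - tc) -> la < frac (td - ta) -> ld < frac (ta - td) ->
  False.
Proof.
intros ? ? ? ? ? ? ? ? Hr H ? ? ? ?.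
fc (tc - tb); fc (tb - tc); fc (td - ta); fc (ta - td); fc (td - tb); fc (tb - td);
destruct Hr as [?|[?|[?|?]]]; destruct H; lra.
Qed.

Lemma cw_free pv px pu py :
  0 <= pv < 1 -> 0 <= px < 1 -> 0 <= pu < 1 -> 0 <= py < 1 ->
  0 < frac (px - pv) -> frac (px - pv) < frac (pu - pv) ->
  0 < frac (py - pu) -> frac (py - pu) < frac (pv - pu) ->
  (0 < frac (pv - py) < frac (px - py) /\ frac (px - py) < frac (pu - py)).
Proof.
intros.
fc (px - pv); fc (pu - pv); fc (py - pu); fc (pv - pu); fc (pv - py); fc (px - py); fc (pu - py);
repeat split; lra.
Qed.

Set Implicit Arguments.
Unset Strict Implicit.


Definition Rltb x y : bool := if Rlt_dec x y then true else false.
Definition Rleb x y : bool := if Rle_dec x y then true else false.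
Lemma RltbP x y : Rltb x y <-> x < y.
Proof. unfold Rltb; destruct (Rlt_dec x y); split; auto; discriminate. Qed.
Lemma RlebP x y : Rleb x y <-> x <= y.
Proof. unfold Rleb; destruct (Rle_dec x y); split; auto; discriminate. Qed.

Fixpoint mx {T : Type} (f : T -> R) (g : T -> bool) (s : seq T) : R :=
  match s with
  | nil => 0
  | w :: s' => if g w then Rmax (f w) (mx f g s') else mx f g s'
  end.

Lemma mx_ub (T : eqType) (f : T -> R) (g : T -> bool) (s : seq T) w : w \in s -> g w -> f w <= mx f g s.
Proof.
elim: s => [|x s IH] //= Hin Hg.
rewrite in_cons in Hin; case/orP: Hin => [/eqP <-|Hin].
- rewrite Hg; apply Rmax_l.
- case: (g x); last by apply IH.
  eapply Rle_trans; [apply IH; auto | apply Rmax_r].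
Qed.

Lemma mx_cases (T : Type) (f : T -> R) (g : T -> bool) (s : seq T) :
  mx f g s = 0 \/ exists w, g w /\ mx f g s = f w.
Proof.
elim: s => [|x s IH] /=; first by left.
case Hg: (g x) => //.
unfold Rmax; destruct (Rle_dec (f x) (mx f g s)) => //.
right; exists x; split; auto.
Qed.

Definition Fp (T : finType) (p : T -> R) u v := frac (p u - p v).

Lemma pdiff (T : finType) (p : T -> R) : circular_ordering p -> forall u v,
  -1 < p u - p v < 1.
Proof. move=> [Hr _] u v; have := Hr u; have := Hr v; lra. Qed.

Lemma Fp0 (T : finType) (p : T -> R) u v : circular_ordering p ->
  frac (p u - p v) = 0 -> u = v.
Proof.
move=> Hp H; have [Hr Hi] := Hp; apply: Hi.
have := pdiff Hp u v; destruct (frac_cases _ (pdiff Hp u v)) as [[h q]|[h q]]; lra.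
Qed.

Lemma Fpinj (T : finType) (p : T -> R) x u v : circular_ordering p ->
  frac (p x - p v) = frac (p u - p v) -> x = u.
Proof.
move=> Hp H; have [Hr Hi] := Hp; apply: Hi.
have := Hr x; have := Hr u; have := Hr v => ? ? ?.
destruct (frac_cases _ (pdiff Hp x v)) as [[h q]|[h q]];
destruct (frac_cases _ (pdiff Hp u v)) as [[h' q']|[h' q']]; lra.
Qed.

Definition good (T : finType) (E : rel T) (p : T -> R) (v w : T) : bool :=
  [forall x, (Rltb 0 (frac (p x - p v)) && Rleb (frac (p x - p v)) (frac (p w - p v)))
     ==> E v x].

Definition lenB (T : finType) (E : rel T) (p : T -> R) (v : T) : R :=
  mx (fun w => frac (p w - p v)) (good E p v) (enum T).

Lemma lenB_range (T : finType) (E : rel T) p v : 0 <= lenB E p v < 1.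
Proof.
rewrite /lenB; case: (mx_cases (fun w => frac (p w - p v)) (good E p v) (enum T)) => [->|[w [_ ->]]].
- lra.
- apply frac_range.
Qed.

Lemma arc_edge (T : finType) (E : rel T) p u v : circular_ordering p -> u <> v ->
  frac (p u - p v) <= lenB E p v -> E v u.
Proof.
move=> Hp Huv H.
have Hpos : 0 < frac (p u - p v).
{ have := frac_range (p u - p v); case=> H1 _; case: (Rle_lt_or_eq_dec _ _ H1) => // H2.
  by exfalso; apply: Huv; apply: (Fp0 Hp); rewrite -H2. }
move: H; rewrite /lenB.
case: (mx_cases (fun w => frac (p w - p v)) (good E p v) (enum T)) => [->|[w [Hg ->]]].
- lra.
- move=> H; move/forallP: Hg => /(_ u) /implyP; apply; apply/andP; split.
  + by apply/RltbP.
  + by apply/RlebP.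
Qed.

Lemma dirB (T : finType) (E : rel T) (HG : simple_graph E) (p : T -> R) :
  circular_ordering p -> CA_free E p -> circular_arc_graph E.
Proof.
move=> Hp Hfree; have [Hr Hi] := Hp.
have [Hsym Hirr] := HG.
exists p, (lenB E p); split; first by move=> v; apply lenB_range.
move=> u v Huv; split.
- move=> Huv'.
  have Hc : frac (p u - p v) <= lenB E p v \/ frac (p v - p u) <= lenB E p u.
  { destruct (Rle_dec (frac (p u - p v)) (lenB E p v)) as [h|h]; first by left.
    destruct (Rle_dec (frac (p v - p u)) (lenB E p u)) as [h'|h']; first by right.
    exfalso; apply: Hfree.
    have nu : ~~ good E p v u.
    { apply/negP => Hg; apply: h.
      by apply: (mx_ub (fun w => frac (p w - p v))) => //; rewrite mem_enum. }
    have nv : ~~ good E p u v.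
    { apply/negP => Hg; apply: h'.
      by apply: (mx_ub (fun w => frac (p w - p u))) => //; rewrite mem_enum. }
    move/forallPn: nu => [x]; rewrite negb_imply => /andP [/andP [/RltbP hx1 /RlebP hx2] hx3].
    move/forallPn: nv => [y]; rewrite negb_imply => /andP [/andP [/RltbP hy1 /RlebP hy2] hy3].
    have hx2' : frac (p x - p v) < frac (p u - p v).
    { case: (Rle_lt_or_eq_dec _ _ hx2) => // e.
      have := Fpinj Hp e => exu; subst x; by rewrite Hsym Huv' in hx3. }
    have hy2' : frac (p y - p u) < frac (p v - p u).
    { case: (Rle_lt_or_eq_dec _ _ hy2) => // e.
      have := Fpinj Hp e => eyv; subst y; by rewrite Huv' in hy3. }
    exists y, v, x, u; split.
    + rewrite /clockwise; apply: cw_free => //; apply Hr.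
    + split; first by rewrite Hsym.
      split; first by rewrite Hsym.
      done. }
  case: Hc => h.
  + exists (p u); split; rewrite /in_arc.
    * rewrite Rminus_diag frac0; apply lenB_range.
    * done.
  + exists (p v); split; rewrite /in_arc.
    * done.
    * rewrite Rminus_diag frac0; apply lenB_range.
- move=> [x [h1 h2]].
  case: (arc_inter _ _ _ _ _ h1 h2) => h.
  + by apply: (arc_edge Hp) => // e; apply Huv.
  + by rewrite Hsym; apply: (arc_edge Hp).
Qed.

Definition Reqb x y : bool := if Req_dec_T x y then true else false.
Lemma ReqbP x y : Reqb x y <-> x = y.
Proof. unfold Reqb; destruct (Req_dec_T x y); split; auto; discriminate. Qed.

Definition ltk (T : finType) (t : T -> R) (u w : T) : bool :=
  Rltb (t u) (t w) || (Reqb (t u) (t w) && ltn (enum_rank u) (enum_rank w)).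

Lemma ltkP (T : finType) (t : T -> R) u w :
  ltk t u w <-> (t u < t w \/ (t u = t w /\ ltn (enum_rank u) (enum_rank w))).
Proof.
rewrite /ltk; split.
- case/orP => [/RltbP h|/andP [/ReqbP h1 h2]]; [by left | by right].
- case => [h|[h1 h2]]; apply/orP; [left; by apply/RltbP | right; apply/andP; split => //; by apply/ReqbP].
Qed.

Lemma ltk_irr (T : finType) (t : T -> R) u : ~ ltk t u u.
Proof. move/ltkP => [h|[_ h]]; [lra | move: h => /= h; by rewrite ltnn in h]. Qed.

Lemma ltk_trans (T : finType) (t : T -> R) u v w : ltk t u v -> ltk t v w -> ltk t u w.
Proof.
move=> /ltkP h1 /ltkP h2; apply/ltkP.
case: h1 => [h1|[e1 h1]]; case: h2 => [h2|[e2 h2]].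
- left; lra.
- left; lra.
- left; lra.
- right; split; [congruence | exact: ltn_trans h1 h2].
Qed.

Lemma ltk_total (T : finType) (t : T -> R) u w : u <> w -> ltk t u w \/ ltk t w u.
Proof.
move=> Huw.
destruct (Rtotal_order (t u) (t w)) as [h|[h|h]].
- left; apply/ltkP; by left.
- have : enum_rank u != enum_rank w.
  { apply/negP => /eqP e; apply: Huw; exact: enum_rank_inj e. }
  rewrite neq_ltn => /orP [h'|h'].
  + left; apply/ltkP; right; by split.
  + right; apply/ltkP; right; by split.
- right; apply/ltkP; by left.
Qed.

Definition rk (T : finType) (t : T -> R) (v : T) : nat := #|[pred u | ltk t u v]|.

Lemma rk_lt (T : finType) (t : T -> R) u w : ltk t u w -> ltn (rk t u) (rk t w).
Proof.
move=> h; apply: proper_card; apply/properP; split.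
- apply/subsetP => x; rewrite !inE => hx; exact: ltk_trans hx h.
- exists u; rewrite !inE //; apply/negP; exact: ltk_irr.
Qed.

Lemma rk_bound (T : finType) (t : T -> R) v : ltn (rk t v) #|T|.
Proof.
rewrite /rk -(cardC [pred u | ltk t u v]) /=.
rewrite -{1}(addn0 #|_|) ltn_add2l.
apply/card_gt0P; exists v; rewrite !inE; apply/negP; exact: ltk_irr.
Qed.

Definition pA (T : finType) (t : T -> R) (v : T) : R := INR (rk t v) / INR #|T|.

Lemma pA_lt (T : finType) (t : T -> R) u w : ltn (rk t u) (rk t w) -> pA t u < pA t w.
Proof.
move=> h; rewrite /pA.
have hn : 0 < INR #|T|.
{ apply lt_0_INR; apply/ltP; move: (rk_bound t w); case: #|T| => //. }
apply Rmult_lt_compat_r; first by apply Rinv_0_lt_compat.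
apply lt_INR; by apply/ltP.
Qed.

Lemma pA_range (T : finType) (t : T -> R) v : 0 <= pA t v < 1.
Proof.
rewrite /pA.
have hb := rk_bound t v.
have hn : 0 < INR #|T|.
{ apply lt_0_INR; apply/ltP; move: hb; case: #|T| => //. }
have hr : INR (rk t v) < INR #|T| by apply lt_INR; apply/ltP.
have h0 := pos_INR (rk t v).
split.
- apply Rmult_le_pos => //; left; by apply Rinv_0_lt_compat.
- apply (Rmult_lt_reg_r (INR #|T|)) => //.
  unfold Rdiv; rewrite Rmult_assoc Rinv_l; lra.
Qed.

Lemma pA_inj (T : finType) (t : T -> R) : injective (pA t).
Proof.
move=> u w e; case: (eqVneq u w) => // /eqP Huw; exfalso.
case: (ltk_total t Huw) => h; have := pA_lt (rk_lt h); lra.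
Qed.

Lemma pA_mono (T : finType) (t : T -> R) u w : pA t u < pA t w -> t u <= t w.
Proof.
move=> h; destruct (Rle_dec (t u) (t w)) as [h'|h'] => //; exfalso.
have hk : ltk t w u by apply/ltkP; left; lra.
have := pA_lt (rk_lt hk); lra.
Qed.

Lemma dirA (T : finType) (E : rel T) (HG : simple_graph E) :
  circular_arc_graph E -> exists p : T -> R, circular_ordering p /\ CA_free E p.
Proof.
move=> [s [l [Hl Hiff]]]; have [Hsym Hirr] := HG.
set t := fun v => frac (s v).
have Ht : forall v, 0 <= t v < 1 by move=> v; apply frac_range.
have Hedge : forall u v, u <> v -> frac (t v - t u) <= l u -> E u v.
{ move=> u v Huv h; apply/(Hiff u v Huv); exists (s v); split; rewrite /in_arc.
  - by rewrite frac_diff.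
  - rewrite Rminus_diag frac0; apply Hl. }
have Hp : circular_ordering (pA t) by split; [move=> v; apply pA_range | apply pA_inj].
exists (pA t); split => //.
move=> [a [b [c [d [Hcw [Hbd [Had Hbc]]]]]]].
have Hpr := pA_range t.
have nbd : b <> d by move=> e; subst; rewrite Hirr in Hbd.
have nbc : b <> c by move=> e; subst; move: Hcw; rewrite /clockwise; lra.
have nad : a <> d by move=> e; subst; move: Hcw; rewrite /clockwise Rminus_diag frac0; lra.
have Hi : frac (t d - t b) <= l b \/ frac (t b - t d) <= l d.
{ have [x [h1 h2]] := (proj1 (Hiff b d nbd) Hbd).
  rewrite /t -!frac_diff; apply (arc_inter _ _ _ _ _ h1 h2). }
have n1 : l b < frac (t c - t b).
{ apply Rnot_le_lt => h; have := Hedge _ _ nbc h; by move/negP: Hbc. }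
have n2 : l c < frac (t b - t c).
{ apply Rnot_le_lt => h; have := Hedge c b (nesym nbc) h; rewrite Hsym; by move/negP: Hbc. }
have n3 : l a < frac (t d - t a).
{ apply Rnot_le_lt => h; have := Hedge _ _ nad h; by move/negP: Had. }
have n4 : l d < frac (t a - t d).
{ apply Rnot_le_lt => h; have := Hedge d a (nesym nad) h; rewrite Hsym; by move/negP: Had. }
have Hrot := rot _ _ _ _ (Hpr a) (Hpr b) (Hpr c) (Hpr d) Hcw.
have Mo := pA_mono (t := t).
apply: (tfinal _ _ _ _ _ _ _ _ (Ht a) (Ht b) (Ht c) (Ht d) (proj1 (Hl a)) (proj1 (Hl b)) (proj1 (Hl c)) (proj1 (Hl d)) _ Hi n1 n2 n3 n4).
case: Hrot => [[h1 [h2 h3]]|[[h1 [h2 h3]]|[[h1 [h2 h3]]|[h1 [h2 h3]]]]].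
- left; repeat split; apply Mo; assumption.
- right; left; repeat split; apply Mo; assumption.
- right; right; left; repeat split; apply Mo; assumption.
- right; right; right; repeat split; apply Mo; assumption.
Qed.


Theorem proposition2 (T : finType) (E : rel T) (HG : simple_graph E) :
  circular_arc_graph E <->
  exists p : T -> R, circular_ordering p /\ CA_free E p.
Proof.
split.
- exact: dirA.
- move=> [p [Hp Hf]]; exact: (dirB HG Hp Hf).
Qed.
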